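(* Let $a>1$ be an integer. If $n_1$ and $n_2$ are overpseudoprimes to base $a$ with $h_a(n_1)\neq h_a(n_2)$, then $\gcd(n_1,n_2)=1$.
   Context: For an integer $a>1$ and an odd integer $n>1$ with $\gcd(a,n)=1$: $h_a(n)$ denotes the multiplicative order of $a$ modulo $n$. A cyclotomic coset of $a$ modulo $n$ is a set of the form $\{\, s a^j \bmod n : j\ge 0\,\}$ with $s\in\{1,\dots,n-1\}$; these cosets partition $\{1,\dots,n-1\}$, and $r_a(n)$ denotes the number of distinct cyclotomic cosets of $a$ modulo $n$. An odd composite number $n$ coprime to $a$ is called an overpseudoprime to base $a$ if $n=r_a(n)\,h_a(n)+1$. *)

(* Defs.v *)
From mathcomp Require Import all_boot.
Set Implicit Arguments. Unset Strict Implicit. Unset Printing Implicit Defensive.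

Definition is_mult_order (a n k : nat) : Prop :=
  [/\ 0 < k, a ^ k = 1 %[mod n] &
      forall m, 0 < m -> a ^ m = 1 %[mod n] -> k <= m].

(* Exponents j range over 0..n-1, which covers a full
   period since a^j mod n is periodic with period h_a(n) <= n-1
   (for gcd(a,n)=1, n>1). *)
Definition cyc_coset (a n s : nat) : {set 'I_n} :=
  [set x : 'I_n | [exists j : 'I_n, nat_of_ord x == (s * a ^ j) %% n]].

Definition num_cosets (a n : nat) : nat :=
  #|[set cyc_coset a n (nat_of_ord s) | s : 'I_n & 0 < nat_of_ord s]|.

Definition overpseudoprime (a n : nat) : Prop :=
  [/\ odd n, 1 < n, ~~ prime n, coprime a n &
      exists h, is_mult_order a n h /\ n = num_cosets a n * h + 1].

(* Main.v *)
Require Import Defs.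
From mathcomp Require Import all_boot.

Lemma exp_red (a m d j : nat) : a ^ m = 1 %[mod d] -> a ^ j = a ^ (j %% m) %[mod d].
Proof.
move=> H; rewrite {1}(divn_eq j m) expnD [j %/ m * m]mulnC expnM -modnMml -modnXm H.
by rewrite modnXm exp1n modnMml mul1n.
Qed.

Lemma coset_le (a n s m : nat) : 0 < m ->
  (forall j, s * a ^ j = s * a ^ (j %% m) %[mod n]) -> #|cyc_coset a n s| <= m.
Proof.
move=> m0 H; case: n H => [|n] H.
  by rewrite (_ : cyc_coset _ _ _ = set0) ?cards0 //; apply/setP => -[].
pose f := fun j : 'I_m => (inord ((s * a ^ j) %% n.+1) : 'I_n.+1).
apply: (leq_trans (subset_leq_card (_ : cyc_coset a n.+1 s \subset f @: setT))).
  2: by apply: (leq_trans (leq_imset_card _ _)); rewrite cardsT card_ord.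
apply/subsetP => x; rewrite inE => /existsP [j /eqP Hx].
apply/imsetP; exists (Ordinal (ltn_pmod j m0)); first by [].
by apply: val_inj; rewrite /f /= inordK ?ltn_pmod // -H -Hx.
Qed.

Lemma cover_ge (a n : nat) :
  n.-1 <= \sum_(B in [set cyc_coset a n (nat_of_ord t) | t : 'I_n & 0 < nat_of_ord t]) #|B|.
Proof.
case: n => [|n']; first by [].
apply: leq_trans (leq_card_cover _).
have -> : n'.+1.-1 = #|[set~ (ord0 : 'I_n'.+1)]| by rewrite cardsC1 card_ord.
apply: subset_leq_card; apply/subsetP => x; rewrite !inE => xn0.
apply/bigcupP; exists (cyc_coset a n'.+1 x).
  apply/imsetP; exists x => //; rewrite inE lt0n.
  by apply: contra xn0 => /eqP x0; apply/eqP; apply: val_inj.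
rewrite inE; apply/existsP; exists ord0; by rewrite expn0 muln1 modn_small.
Qed.

Lemma order_le_coset (a n h s : nat) : overpseudoprime a n -> is_mult_order a n h ->
  0 < s < n -> h <= #|cyc_coset a n s|.
Proof.
case=> _ n1 _ _ [h' [[h'0 Ha' Hm'] Hn]] [h0 Ha Hm] /andP [s0 sn].
have eh : h' = h by apply/eqP; rewrite eqn_leq Hm' // Hm.
subst h'.
set P := [set cyc_coset a n (nat_of_ord t) | t : 'I_n & 0 < nat_of_ord t].
have HP : forall B, B \in P -> #|B| <= h.
  move=> B /imsetP [t _ ->]; apply: coset_le => // j.
  by rewrite -modnMmr (@exp_red a h n j Ha) modnMmr.
have Hcov : n.-1 <= \sum_(B in P) #|B| by apply: cover_ge.
have Hsum : \sum_(B in P) #|B| + \sum_(B in P) (h - #|B|) = #|P| * h.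
  rewrite -big_split /= -sum_nat_const; apply: eq_bigr => B /HP.
  by move/subnKC.
have Hz : \sum_(B in P) (h - #|B|) = 0.
  have e : n.-1 = #|P| * h by rewrite {1}Hn addn1.
  rewrite e in Hcov.
  have : #|P| * h + \sum_(B in P) (h - #|B|) <= #|P| * h.
    by rewrite -{2}Hsum leq_add2r.
  by rewrite -{2}(addn0 (#|P| * h)) leq_add2l leqn0 => /eqP.
have CP : cyc_coset a n s \in P.
  by apply/imsetP; exists (Ordinal sn); rewrite ?inE.
rewrite -subn_eq0 -leqn0 -Hz (bigD1 _ CP) /=; exact: leq_addr.
Qed.

Lemma coset_le_p (a n p m : nat) : prime p -> p %| n -> 0 < m ->
  a ^ m = 1 %[mod p] -> #|cyc_coset a n (n %/ p)| <= m.
Proof.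
move=> pp pn m0 Hm; apply: coset_le => // j.
set s := n %/ p.
have en : n = s * p by rewrite /s divnK.
by rewrite en -!muln_modr (@exp_red a m p j Hm).
Qed.

Lemma ord_mod_p (a n p h : nat) : p %| n -> is_mult_order a n h -> a ^ h = 1 %[mod p].
Proof.
by move=> pn [_ Ha _]; rewrite -(modn_dvdm _ pn) Ha modn_dvdm.
Qed.

Lemma half_le (a n1 n2 h1 h2 p : nat) : prime p -> p %| n1 -> p %| n2 ->
  overpseudoprime a n1 -> is_mult_order a n1 h1 -> is_mult_order a n2 h2 -> h1 <= h2.
Proof.
move=> pp p1 p2 op1 o1 o2.
have n1g : 1 < n1 by case: op1.
have p0 := prime_gt0 pp.
apply: (leq_trans (@order_le_coset a n1 h1 (n1 %/ p) op1 o1 _)).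
  rewrite divn_gt0 // dvdn_leq ?(ltnW n1g) //=.
  by apply: ltn_Pdiv; [exact: prime_gt1 | exact: ltnW].
apply: coset_le_p => //; first by case: o2.
exact: ord_mod_p o2.
Qed.

Theorem corollary1 (a n1 n2 h1 h2 : nat) :
  1 < a ->
  overpseudoprime a n1 -> overpseudoprime a n2 ->
  is_mult_order a n1 h1 -> is_mult_order a n2 h2 ->
  h1 <> h2 ->
  coprime n1 n2.
Proof.
move=> a1 op1 op2 o1 o2 hne.
case: (boolP (coprime n1 n2)) => // nc; exfalso.
have n1g : 0 < n1 by case: op1 => _ /ltnW.
have g1 : 1 < gcdn n1 n2.
  by rewrite ltn_neqAle eq_sym nc /= gcdn_gt0 n1g.
have pp := pdiv_prime g1.
have p1 : pdiv (gcdn n1 n2) %| n1 := dvdn_trans (pdiv_dvd _) (dvdn_gcdl _ _).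
have p2 : pdiv (gcdn n1 n2) %| n2 := dvdn_trans (pdiv_dvd _) (dvdn_gcdr _ _).
apply: hne; apply/eqP; rewrite eqn_leq.
by rewrite (@half_le a n1 n2 h1 h2 _ pp p1 p2 op1 o1 o2) (@half_le a n2 n1 h2 h1 _ pp p2 p1 op2 o2 o1).
Qed.
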